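(* Let $(D,\chi)$ be a shaped oriented link diagram, and let $\mathfrak f,\mathfrak f'$ be two flattenings of $(D,\chi)$ (in the sense of the context). For each component $j$ of $D$ let $(\mu_j,\lambda_j)=(\mathfrak s(\mathfrak m_j),\mathfrak s(\mathfrak l_j))$ and $(\mu_j',\lambda_j')=(\mathfrak s'(\mathfrak m_j),\mathfrak s'(\mathfrak l_j))$ be the induced log-decoration values of $\mathfrak f$ and $\mathfrak f'$, and put $\Delta\mu_j=\mu_j'-\mu_j$, $\Delta\lambda_j=\lambda_j'-\lambda_j$ (these are integers). Then \[ \mathcal V(D,\chi,\mathfrak f')-\mathcal V(D,\chi,\mathfrak f)\equiv 4\pi^2 i\sum_j\big(\Delta\lambda_j\,\mu_j-\Delta\mu_j\,\lambda_j\big)\pmod{2\pi^2 i\mathbb Z}, \] the sum running over the components of $D$. In particular $\mathcal V(D,\chi,\mathfrak f)$ depends on the flattening $\mathfrak f$ only through its induced log-decoration values $(\mu_j,\lambda_j)_j$.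
   Context: Oriented link diagram $D$ in the plane; segments are the edges of its underlying $4$-valent planar graph, regions are the components of the complement of that graph. At each crossing $c$, rotate so both strands point right; label incoming upper-left segment $1$, incoming lower-left segment $2$, outgoing lower-right segment $1'$ (continuation of $1$), outgoing upper-right segment $2'$ (continuation of $2$); regions $N$ (top, between $1$ and $2'$), $S$ (bottom, between $2$ and $1'$), $W$ (left, between $1$ and $2$), $E$ (right, between $2'$ and $1'$); $\epsilon=\pm1$ is the sign of the crossing. Shaping: assign $\chi_i=(a_i,b_i,m_i)\in(\mathbb C^\times)^3$ to each segment so that $m$ is constant along each component and at each crossing: if positive, with $A=1-\frac{m_1b_1}{b_2}(1-\frac{a_1}{m_1})(1-\frac{1}{m_2a_2})$, $a_{1'}=a_1/A$, $a_{2'}=a_2A$, $b_{1'}=\frac{m_2b_2}{m_1}(1-m_2a_2(1-\frac{b_2}{m_1b_1}))^{-1}$, $b_{2'}=b_1(1-\frac{m_1}{a_1}(1-\frac{b_2}{m_1b_1}))$; if negative, with $\tilde A=1-\frac{b_2}{m_1b_1}(1-m_1a_1)(1-\frac{m_2}{a_2})$, $a_{1'}=a_1/\tilde A$, $a_{2'}=a_2\tilde A$, $b_{1'}=\frac{m_2b_2}{m_1}(1-\frac{a_2}{m_2}(1-\frac{m_1b_1}{b_2}))$, $b_{2'}=b_1(1-\frac{1}{m_1a_1}(1-\frac{m_1b_1}{b_2}))^{-1}$; all values finite and nonzero. A crossing is pinched if $b_{2'}=b_1$ (equivalently $b_2=m_1b_1$, $m_2b_2=m_1b_{1'}$, $m_2b_{2'}=b_{1'}$).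 Flattening $\mathfrak f$: numbers $\mu_j$ per component with $e^{2\pi i\mu_j}=m_j$; $\beta_k$ per segment with $e^{2\pi i\beta_k}=b_k$; $\gamma_R$ per region with $e^{2\pi i(\gamma_{R'}-\gamma_{R})}=a_k$ whenever regions $R'$ and $R$ lie respectively to the right and left of segment $k$ (relative to its orientation); and at each non-pinched crossing a number $\kappa$ with $e^{2\pi i\kappa}=K:=e^{2\pi i\gamma_N}/(1-(b_{2'}/b_1)^\epsilon)$. Lifted dilogarithm: for $(\zeta^0,\zeta^1)\in\mathbb C^2$ with $w=e^{\zeta^0}\neq1$ and $e^{\zeta^1}(1-w)=1$, set $p^0=(\zeta^0-\operatorname{Log}w)/2\pi i$, $p^1=(\zeta^1+\operatorname{Log}(1-w))/2\pi i\in\mathbb Z$ (principal Log, argument in $(-\pi,\pi]$) and $\mathcal L(\zeta^0,\zeta^1)=R(w)-\frac{\pi^2}{6}+\pi i\,(p^0\operatorname{Log}(1-w)+p^1\operatorname{Log}w)\in\mathbb C/2\pi^2\mathbb Z$, where $R(w)=\operatorname{Li}_2(w)+\frac12\operatorname{Log}w\operatorname{Log}(1-w)$, $\operatorname{Li}_2(w)=-\int_0^w\frac{\log(1-t)}{t}dt$; $\mathcal L$ is understood as the continuous extension of this expression. Crossing volume: at a non-pinched crossing set $\zeta_N^0=2\pi i\epsilon(\beta_{2'}-\beta_1)$, $\zeta_N^1=2\pi i(\kappa-\gamma_N)$; $\zeta_W^0=2\pi i\epsilon(\beta_2-\beta_1-\mu_1)$, $\zeta_W^1=2\pi i(\kappa-\gamma_W+\epsilon\mu_1)$;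 $\zeta_S^0=2\pi i\epsilon(\beta_2-\beta_{1'}+\mu_2-\mu_1)$, $\zeta_S^1=2\pi i(\kappa-\gamma_S+\epsilon(\mu_1-\mu_2))$; $\zeta_E^0=2\pi i\epsilon(\beta_{2'}-\beta_{1'}+\mu_2)$, $\zeta_E^1=2\pi i(\kappa-\gamma_E-\epsilon\mu_2)$ (here $\mu_1,\mu_2$ are the parameters of the components containing strands $1,2$); these satisfy the conditions for $\mathcal L$, and $\mathcal V(c,\mathfrak f)=-i\epsilon[\mathcal L(\zeta_N^0,\zeta_N^1)-\mathcal L(\zeta_W^0,\zeta_W^1)+\mathcal L(\zeta_S^0,\zeta_S^1)-\mathcal L(\zeta_E^0,\zeta_E^1)]$. At a pinched crossing $\mathcal V(c,\mathfrak f)=2\pi^2 i[\beta_1(\gamma_W-\gamma_N)-\beta_{1'}(\gamma_S-\gamma_E)+\beta_2(\gamma_S-\gamma_W)-\beta_{2'}(\gamma_E-\gamma_N)-\mu_1(\epsilon(\beta_1-\beta_{1'}+\mu_2)+\gamma_S-\gamma_W)-\mu_2(\epsilon(\beta_{2'}-\beta_2+\mu_1)+\gamma_E-\gamma_S)]$. The diagram volume is $\mathcal V(D,\chi,\mathfrak f)=\sum_c\mathcal V(c,\mathfrak f)\in\mathbb C/2\pi^2 i\mathbb Z$. Induced log-decoration: for component $j$, $\mathfrak s(\mathfrak m_j)=\mu_j$ and $\mathfrak s(\mathfrak l_j)=-w_j\mu_j+\sum_k\eta_k\beta_k$, where $w_j$ is the writhe of component $j$ (sum of signs of crossings both of whose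 strands lie in component $j$), the sum runs over segments $k$ of component $j$, and $\eta_k=1$ if segment $k$ is over-under (overstrand at its initial crossing, understrand at its terminal crossing), $\eta_k=-1$ if it is under-over, and $\eta_k=0$ otherwise. *)

(* Defs.v *)
From HB Require Import structures.
From mathcomp Require Import all_boot all_order all_algebra.
From mathcomp Require Import all_classical all_reals all_analysis.
From mathcomp Require Import complex.

Set Implicit Arguments.
Unset Strict Implicit.
Unset Printing Implicit Defensive.

Import Order.TTheory GRing.Theory Num.Theory.
Import numFieldNormedType.Exports.
Local Open Scope ring_scope.

(* At each crossing c the four segment ends are, after rotating so that     *)
(* both strands point to the right:                                         *)
(*   in1 c  = incoming upper-left segment   (label 1)                       *)
(*   in2 c  = incoming lower-left segment   (label 2)                       *)
(*   out1 c = outgoing lower-right segment  (label 1', continuation of 1)   *)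
(*   out2 c = outgoing upper-right segment  (label 2', continuation of 2)   *)
(* positive c = (sign of c == +1).  lreg k / rreg k are the regions to the  *)
(* left / right of segment k (w.r.t. its orientation); comp k is the        *)
(* component containing segment k.  Segments that are endpoints of no       *)
(* crossing are crossing-free closed components.                            *)

Record diagram := Diagram {
  crossing : finType;
  segment : finType;
  region : finType;
  component : finType;
  positive : crossing -> bool;
  in1 : crossing -> segment;
  in2 : crossing -> segment;
  out1 : crossing -> segment;
  out2 : crossing -> segment;
  comp : segment -> component;
  lreg : segment -> region;
  rreg : segment -> region }.

Section DiagramCombinatorics.
Variable D : diagram.

Definition inseg (x : crossing D * bool) : segment D :=
  if x.2 then in2 x.1 else in1 x.1.
Definition outseg (x : crossing D * bool) : segment D :=
  if x.2 then out2 x.1 else out1 x.1.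

Definition strand_next (k : segment D) : segment D :=
  if [pick x | inseg x == k] is Some x then outseg x else k.

Definition sreg (x : segment D * bool) : region D :=
  if x.2 then lreg x.1 else rreg x.1.
Definition flip (x : segment D * bool) : segment D * bool := (x.1, ~~ x.2).

(* boundary walk of a region (region kept on the left): the combinatorial
   map (rotation system) of the diagram, whose orbits are the faces.       *)
Definition fsucc (x : segment D * bool) : segment D * bool :=
  let: (k, l) := x in
  if l then
    if [pick c | in1 c == k] is Some c then (out2 c, true) else
    if [pick c | in2 c == k] is Some c then (in1 c, false) else x
  else
    if [pick c | out1 c == k] is Some c then (in2 c, false) else
    if [pick c | out2 c == k] is Some c then (out1 c, true) else x.

(* adjacency generating the connected components of the diagram (as a
   subset of the plane) *)
Definition gadj : rel (segment D * bool) :=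
  fun x y => [|| y == fsucc x, x == fsucc y | y == flip x].

(* incidence between diagram components and regions *)
Definition incid : rel (segment D * bool) :=
  fun x y => gadj x y || (sreg x == sreg y).

Definition is_link_diagram : Prop :=
  (* every segment has exactly one initial and one terminal crossing end,
     or none at all (crossing-free component) *)
  [/\ injective inseg, injective outseg &
      forall k, (exists x, inseg x = k) <-> (exists x, outseg x = k)] /\
  (forall k k', comp k = comp k' <-> fconnect strand_next k k') /\
  (forall j : component D, exists k, comp k = j) /\
  (* the four regions N, W, S, E around each crossing are well defined *)
  (forall x, sreg (fsucc x) = sreg x) /\
  (* distinct faces of a connected piece of the diagram are distinct regions *)
  (forall x y, connect gadj x y -> sreg x = sreg y -> fconnect fsucc x y) /\
  (* each connected piece of the diagram is planar (Euler characteristic 2) *)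
  (forall x,
     let V := #|[pred c | connect gadj x (in1 c, true)]| in
     let E := #|[pred k | connect gadj x (k, true)]| in
     let F := fcard fsucc [pred y | connect gadj x y] in
     (0 < V)%N -> (V + F = E + 2)%N) /\
  (* the regions are the components of the complement in the plane: the
     bipartite incidence graph pieces/regions is a tree *)
  ((forall r, exists x, sreg x = r) \/ #|segment D| = 0%N) /\
  (forall x y, connect incid x y) /\
  (#|region D| + n_comp gadj predT = fcard fsucc predT + 1)%N.

Definition regN (c : crossing D) := lreg (in1 c).
Definition regW (c : crossing D) := rreg (in1 c).
Definition regS (c : crossing D) := rreg (in2 c).
Definition regE (c : crossing D) := lreg (out1 c).

Definition writhe (j : component D) : int :=
  \sum_(c | (comp (in1 c) == j) && (comp (in2 c) == j))
     (if positive c then 1 else -1).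

(* strand 1 is the overstrand at a positive crossing, strand 2 at a
   negative one *)
Definition over_init (k : segment D) : bool :=
  [exists c, ((out1 c == k) && positive c) ||
             ((out2 c == k) && ~~ positive c)].
Definition under_init (k : segment D) : bool :=
  [exists c, ((out1 c == k) && ~~ positive c) ||
             ((out2 c == k) && positive c)].
Definition over_term (k : segment D) : bool :=
  [exists c, ((in1 c == k) && positive c) ||
             ((in2 c == k) && ~~ positive c)].
Definition under_term (k : segment D) : bool :=
  [exists c, ((in1 c == k) && ~~ positive c) ||
             ((in2 c == k) && positive c)].

Definition eta (k : segment D) : int :=
  if over_init k && under_term k then 1
  else if under_init k && over_term k then -1 else 0.

End DiagramCombinatorics.

Section ComplexFunctions.
Variable R : realType.
Local Notation C := R[i].

Definition cre (z : C) : R := let: Complex a _ := z in a.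
Definition cim (z : C) : R := let: Complex _ b := z in b.
Definition cabs (z : C) : R := Num.sqrt (cre z ^+ 2 + cim z ^+ 2).

Definition cexp (z : C) : C :=
  Complex (expR (cre z) * cos (cim z)) (expR (cre z) * sin (cim z)).

(* principal argument, in (-pi, pi] *)
Definition carg (z : C) : R :=
  if 0 <= cim z then acos (cre z / cabs z) else - acos (cre z / cabs z).

Definition cLog (z : C) : C := Complex (ln (cabs z)) (carg z).

Definition rC (x : R) : C := Complex x 0.
Definition iC : C := Complex 0 1.
Definition piC : C := rC pi.

Definition e2pi (x : C) : C := cexp (2%:R * piC * iC * x).

(* Li2(w) = - int_0^w log(1-t)/t dt along the segment [0,w]
          = - int_0^1 Log(1 - s w)/s ds  (principal Log) *)
Definition Li2 (w : C) : C :=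
  - Complex (\int[@lebesgue_measure R]_(s in `[0%R, 1%R]) (cre (cLog (1 - rC s * w)) / s))
            (\int[@lebesgue_measure R]_(s in `[0%R, 1%R]) (cim (cLog (1 - rC s * w)) / s)).

Definition Rdilog (w : C) : C := Li2 w + 2%:R^-1 * cLog w * cLog (1 - w).

(* lifted dilogarithm (representative in C of a class in C/2pi^2 Z) *)
Definition Ldilog (z0 z1 : C) : C :=
  let w := cexp z0 in
  let p0 := (z0 - cLog w) / (2%:R * piC * iC) in
  let p1 := (z1 + cLog (1 - w)) / (2%:R * piC * iC) in
  Rdilog w - piC ^+ 2 / 6%:R + piC * iC * (p0 * cLog (1 - w) + p1 * cLog w).

Definition congr_mod (m x y : C) : Prop := exists n : int, x - y = n%:~R * m.

End ComplexFunctions.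

Section Volume.
Variable R : realType.
Local Notation C := R[i].
Variable D : diagram.

(* A shaping chi_k = (a k, b k, m (comp k)); m is constant on components *)
Definition is_shaping (a b : segment D -> C) (m : component D -> C) : Prop :=
  (forall k, a k != 0 /\ b k != 0) /\ (forall j, m j != 0) /\
  forall c : crossing D,
    let a1 := a (in1 c) in let a2 := a (in2 c) in
    let a1' := a (out1 c) in let a2' := a (out2 c) in
    let b1 := b (in1 c) in let b2 := b (in2 c) in
    let b1' := b (out1 c) in let b2' := b (out2 c) in
    let m1 := m (comp (in1 c)) in let m2 := m (comp (in2 c)) in
    if positive c then
      let A := 1 - m1 * b1 / b2 * (1 - a1 / m1) * (1 - 1 / (m2 * a2)) in
      let Q := 1 - m2 * a2 * (1 - b2 / (m1 * b1)) in
      [/\ A != 0, Q != 0, a1' = a1 / A, a2' = a2 * A &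
          b1' = m2 * b2 / m1 * Q^-1 /\
          b2' = b1 * (1 - m1 / a1 * (1 - b2 / (m1 * b1)))]
    else
      let A := 1 - b2 / (m1 * b1) * (1 - m1 * a1) * (1 - m2 / a2) in
      let Q := 1 - 1 / (m1 * a1) * (1 - m1 * b1 / b2) in
      [/\ A != 0, Q != 0, a1' = a1 / A, a2' = a2 * A &
          b1' = m2 * b2 / m1 * (1 - a2 / m2 * (1 - m1 * b1 / b2)) /\
          b2' = b1 * Q^-1].

Definition pinched (b : segment D -> C) (c : crossing D) : bool :=
  b (out2 c) == b (in1 c).

Record flattening := Flattening {
  fmu : component D -> C;
  fbeta : segment D -> C;
  fgamma : region D -> C;
  fkappa : crossing D -> C }.

Definition is_flattening (a b : segment D -> C) (m : component D -> C)
    (f : flattening) : Prop :=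
  (forall j, e2pi (fmu f j) = m j) /\
  (forall k, e2pi (fbeta f k) = b k) /\
  (forall k, e2pi (fgamma f (rreg k) - fgamma f (lreg k)) = a k) /\
  (forall c, ~~ pinched b c ->
     let r := b (out2 c) / b (in1 c) in
     e2pi (fkappa f c) =
       e2pi (fgamma f (regN c)) / (1 - (if positive c then r else r^-1))).

Definition eps (c : crossing D) : C := if positive c then 1 else -1.

Definition crossing_volume (b : segment D -> C) (f : flattening)
    (c : crossing D) : C :=
  let e := eps c in
  let tpi := 2%:R * (piC R) * (iC R) in
  let be1 := fbeta f (in1 c) in let be2 := fbeta f (in2 c) in
  let be1' := fbeta f (out1 c) in let be2' := fbeta f (out2 c) in
  let mu1 := fmu f (comp (in1 c)) in let mu2 := fmu f (comp (in2 c)) in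
  let gN := fgamma f (regN c) in let gW := fgamma f (regW c) in
  let gS := fgamma f (regS c) in let gE := fgamma f (regE c) in
  let k := fkappa f c in
  if pinched b c then
    2%:R * (piC R) ^+ 2 * (iC R) *
      (be1 * (gW - gN) - be1' * (gS - gE) + be2 * (gS - gW) - be2' * (gE - gN)
       - mu1 * (e * (be1 - be1' + mu2) + gS - gW)
       - mu2 * (e * (be2' - be2 + mu1) + gE - gS))
  else
    - (iC R) * e *
      (Ldilog (tpi * e * (be2' - be1)) (tpi * (k - gN))
       - Ldilog (tpi * e * (be2 - be1 - mu1)) (tpi * (k - gW + e * mu1))
       + Ldilog (tpi * e * (be2 - be1' + mu2 - mu1)) (tpi * (k - gS + e * (mu1 - mu2)))
       - Ldilog (tpi * e * (be2' - be1' + mu2)) (tpi * (k - gE - e * mu2))).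

(* representative in C of the diagram volume in C / 2 pi^2 i Z *)
Definition diagram_volume (b : segment D -> C) (f : flattening) : C :=
  \sum_(c : crossing D) crossing_volume b f c.

Definition ld_mu (f : flattening) (j : component D) : C := fmu f j.
Definition ld_lambda (f : flattening) (j : component D) : C :=
  - (writhe j)%:~R * fmu f j + \sum_(k | comp k == j) (eta k)%:~R * fbeta f k.

End Volume.

(* Main.v *)
Require Import Defs.
From HB Require Import structures.
From mathcomp Require Import all_boot all_order all_algebra.
From mathcomp Require Import all_classical all_reals all_analysis.
From mathcomp Require Import complex.
From mathcomp Require Import ring lra.
Import Order.TTheory GRing.Theory Num.Theory.
Local Open Scope ring_scope.
Set Implicit Arguments.
Unset Strict Implicit.

Section CE.
Variable R : realType.
Local Notation C := R[i].

Lemma cos_int2pi (n : int) : cos (n%:~R * (pi *+ 2) : R) = 1 /\ sin (n%:~R * (pi *+ 2) : R) = 0.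
Proof.
have hp : forall k : nat, cos (k%:R * (pi *+ 2) : R) = 1 /\ sin (k%:R * (pi *+ 2) : R) = 0.
  move=> k; rewrite mulr_natl.
  have := @periodicn _ _ (@cos R) _ (@cosD2pi R) k 0.
  have := @periodicn _ _ (@sin R) _ (@sinD2pi R) k 0.
  by rewrite !add0r cos0 sin0 => -> ->.
case: n => k; first exact: hp.
rewrite NegzE mulrNz mulNr cosN sinN; have [-> ->] := hp k.+1; by rewrite oppr0.
Qed.

Lemma cos_eq1 (b : R) : cos b = 1 -> exists n : int, b = n%:~R * (pi *+ 2).
Proof.
move=> hb.
have p2 : 0 < (pi *+ 2 : R) by rewrite pmulrn_rgt0 // pi_gt0.
set n := Num.floor (b / (pi *+ 2)).
exists n.
have h1 := floor_le (b / (pi *+ 2)); have h2 := floorD1_gt (b / (pi *+ 2)).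
rewrite -/n rmorphD /= in h1 h2.
set r := b - n%:~R * (pi *+ 2).
have r0 : 0 <= r.
  by move: h1; rewrite ler_pdivlMr // /r; lra.
have r2 : r < pi *+ 2.
  by move: h2; rewrite ltr_pdivrMr // mulrDl mul1r /r; lra.
have cr : cos r = 1 by rewrite /r cosB hb; have [-> ->] := cos_int2pi n; rewrite mulr1 mulr0 addr0.
suff : r = 0 by move/eqP; rewrite subr_eq0 => /eqP.
have pi0 := @pi_gt0 R.
have key : forall x : R, 0 <= x <= pi -> cos x = 1 -> x = 0.
  move=> x /andP[x0 xp] cx; apply: (@cos_inj R); rewrite ?cx ?cos0 //.
    by rewrite in_itv /= x0 xp.
  by rewrite in_itv /= lexx ltW.
case: (leP r pi) => hr; first by apply: key => //; rewrite r0 hr.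
have : pi *+ 2 - r = 0.
  apply: key; first by apply/andP; split; rewrite -?mulr2n; lra.
  rewrite cosB cr; have := @cos2pi R; have := @sin2pi R; move=> -> ->; rewrite mulr1 mul0r addr0 //.
lra.
Qed.

Lemma cexpD (x y : C) : cexp (x + y) = cexp x * cexp y.
Proof.
case: x => a b; case: y => c d; rewrite /cexp /=.
rewrite expRD cosD sinD; apply/eqP; rewrite eq_complex /=; apply/andP; split; apply/eqP; ring.
Qed.

Lemma cexp0 : cexp (0 : C) = 1.
Proof. by rewrite /cexp /= expR0 cos0 sin0 !mulr1 mulr0. Qed.

Lemma cexp_neq0 (x : C) : cexp x != 0.
Proof.
case: x => a b; rewrite /cexp /= eq_complex /= negb_and.
have he : expR a != 0 by rewrite gt_eqF // expR_gt0.
have := cos2Dsin2 b; case: (cos b =P 0) => [->|/eqP hc] h.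
  rewrite orbC mulf_neq0 //; apply/eqP => hs; move: h; rewrite hs expr0n /= addr0; lra.
by rewrite mulf_neq0.
Qed.

Definition Tc : C := 2%:R * piC R * iC R.

Lemma TcE : Tc = Complex 0 (pi *+ 2).
Proof.
rewrite /Tc /piC /rC /iC.
have -> : (2%:R : C) = Complex 2%:R 0 by rewrite -[Complex _ _]/(real_complex R 2%:R) rmorph_nat.
apply/eqP; rewrite eq_complex /=; apply/andP; split; apply/eqP; ring.
Qed.

Lemma Tc_neq0 : Tc != 0.
Proof. rewrite TcE eq_complex /= negb_and orbC; apply/orP; left; rewrite gt_eqF // pmulrn_rgt0 //; exact: pi_gt0. Qed.

Lemma intC (n : int) : (n%:~R : C) = Complex n%:~R 0.
Proof. by rewrite -[Complex _ _]/(real_complex R n%:~R) rmorph_int. Qed.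

Lemma cexpTint (n : int) : cexp (Tc * n%:~R) = 1.
Proof.
rewrite TcE intC /cexp /= !mul0r !mulr0 subr0 add0r expR0 !mul1r.
have [h1 h2] := cos_int2pi n.
by rewrite mulrC h1 h2.
Qed.

Lemma cexp_eq1 (z : C) : cexp z = 1 -> exists n : int, z = Tc * n%:~R.
Proof.
case: z => a c; rewrite /cexp /= => /eqP; rewrite eq_complex /= => /andP[/eqP h1 /eqP h2].
have he : 0 < expR a := expR_gt0 a.
have hs : sin c = 0 by move: h2 => /eqP; rewrite mulf_eq0 gt_eqF //= => /eqP.
have := cos2Dsin2 c; rewrite hs expr0n /= addr0 => hc.
have hc1 : cos c = 1.
  have : (cos c - 1) * (cos c + 1) = 0 by rewrite -subr_sqr hc expr1n subrr.
  move/eqP; rewrite mulf_eq0 => /orP[/eqP|/eqP h]; first by move/eqP; rewrite subr_eq0 => /eqP.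
  have : cos c = -1 by apply/eqP; rewrite -subr_eq0 opprK h.
  move=> hm; move: h1; rewrite hm mulrN1 => h1; move: he; rewrite -oppr_lt0 h1; lra.
have ea : a = 0.
  by move: h1; rewrite hc1 mulr1 -expR0 => /expR_inj.
have [n hn] := cos_eq1 hc1.
exists n; rewrite TcE intC ea hn; apply/eqP; rewrite eq_complex /=; apply/andP; split; apply/eqP; ring.
Qed.

Lemma cabs_gt0 (w : C) : w != 0 -> 0 < cabs w.
Proof.
case: w => x y; rewrite eq_complex /= negb_and /cabs /= => h.
rewrite sqrtr_gt0; have hx2 := sqr_ge0 x; have hy2 := sqr_ge0 y; case/orP: h => h.
  have : 0 < x ^+ 2 by rewrite exprn_even_gt0.
  lra.
have : 0 < y ^+ 2 by rewrite exprn_even_gt0.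
lra.
Qed.

Lemma cexpK (w : C) : w != 0 -> cexp (cLog w) = w.
Proof.
move=> hw; have hr := cabs_gt0 hw.
move: hr; case: w hw => x y hw; rewrite /cLog /cexp /carg /= => hr.
set r := cabs (Complex x y) in hr *.
have r2 : r ^+ 2 = x ^+ 2 + y ^+ 2 by rewrite /r /cabs /= sqr_sqrtr // addr_ge0 // sqr_ge0.
have hx : -1 <= x / r <= 1.
  rewrite -ler_norml normrM normfV (gtr0_norm hr) ler_pdivrMr // mul1r.
  rewrite -(@ler_pXn2r _ 2) ?nnegrE ?normr_ge0 ?(ltW hr) // real_normK ?num_real // r2 lerDl sqr_ge0 //.
have hs : Num.sqrt (1 - (x / r) ^+ 2) = `|y| / r.
  have -> : 1 - (x / r) ^+ 2 = (y / r) ^+ 2.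
    rewrite !expr_div_n r2; field; rewrite -r2 expf_neq0 // gt_eqF //.
  by rewrite sqrtr_sqr normrM normfV (gtr0_norm hr).
rewrite (lnK (x:=r)) ?posrE //.
apply/eqP; rewrite eq_complex /=; apply/andP; split; apply/eqP.
  case: ifP => _; rewrite ?cosN acosK ?in_itv //= mulrC divfK ?gt_eqF //.
case: ifP => hy; rewrite ?sinN sin_acos // hs.
  by rewrite ger0_norm // mulrC divfK ?gt_eqF.
by rewrite ltr0_norm ?ltNge ?hy // mulrC mulNr divfK ?gt_eqF // opprK.
Qed.

Lemma cexpN (x : C) : cexp (- x) = (cexp x)^-1.
Proof.
apply: (mulIf (cexp_neq0 x)); by rewrite mulVf ?cexp_neq0 // -cexpD addNr cexp0.
Qed.

End CE.

Section Comb.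
Variable R : realType.
Variable D : diagram.
Hypothesis HD : is_link_diagram D.
Local Notation C := R[i].
Implicit Types (c : crossing D) (k : segment D) (x y : crossing D * bool).

Lemma inj_in : injective (@inseg D). Proof. by case: HD => [[]]. Qed.
Lemma inj_out : injective (@outseg D). Proof. by case: HD => [[]]. Qed.
Lemma ex_io k : (exists x, inseg x = k) <-> (exists x, @outseg D x = k).
Proof. by case: HD => [[]]. Qed.
Lemma comp_conn (k k' : segment D) : Defs.comp k = Defs.comp k' <-> fconnect (@strand_next D) k k'.
Proof. by case: HD => _ []. Qed.
Lemma sreg_fsucc (x : segment D * bool) : sreg (fsucc x) = sreg x.
Proof. by case: HD => _ [_ [_ []]]. Qed.

Lemma pick_in1 c : [pick c' | in1 c' == in1 c] = Some c.
Proof.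
case: pickP => [c' /eqP h|/(_ c)]; last by rewrite eqxx.
by have := @inj_in (c', false) (c, false) h; case=> ->.
Qed.
Lemma pick_in2 c : [pick c' | in2 c' == in2 c] = Some c.
Proof.
case: pickP => [c' /eqP h|/(_ c)]; last by rewrite eqxx.
by have := @inj_in (c', true) (c, true) h; case=> ->.
Qed.
Lemma pick_out1 c : [pick c' | out1 c' == out1 c] = Some c.
Proof.
case: pickP => [c' /eqP h|/(_ c)]; last by rewrite eqxx.
by have := @inj_out (c', false) (c, false) h; case=> ->.
Qed.
Lemma pick_out2 c : [pick c' | out2 c' == out2 c] = Some c.
Proof.
case: pickP => [c' /eqP h|/(_ c)]; last by rewrite eqxx.
by have := @inj_out (c', true) (c, true) h; case=> ->.
Qed.
Lemma pick_in12 c : [pick c' | in1 c' == in2 c] = None.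
Proof.
case: pickP => // c' /eqP h.
by have := @inj_in (c', false) (c, true) h; move/(congr1 snd).
Qed.
Lemma pick_out12 c : [pick c' | out1 c' == out2 c] = None.
Proof.
case: pickP => // c' /eqP h.
by have := @inj_out (c', false) (c, true) h; move/(congr1 snd).
Qed.

Lemma lreg_out2 c : lreg (out2 c) = regN c.
Proof. by have := sreg_fsucc (in1 c, true); rewrite /fsucc pick_in1 /sreg /= /regN => h; rewrite h. Qed.
Lemma lreg_in2 c : lreg (in2 c) = regW c.
Proof. by have := sreg_fsucc (in2 c, true); rewrite /fsucc pick_in12 pick_in2 /sreg /= /regW => h; rewrite h. Qed.
Lemma rreg_out1 c : rreg (out1 c) = regS c.
Proof. by have := sreg_fsucc (out1 c, false); rewrite /fsucc pick_out1 /sreg /= /regS => h; rewrite h. Qed.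
Lemma rreg_out2 c : rreg (out2 c) = regE c.
Proof. by have := sreg_fsucc (out2 c, false); rewrite /fsucc pick_out12 pick_out2 /sreg /= /regE => h; rewrite h. Qed.

Lemma sn_in x : strand_next (inseg x) = @outseg D x.
Proof.
rewrite /strand_next; case: pickP => [y /eqP h|/(_ x)]; last by rewrite eqxx.
by rewrite (inj_in h).
Qed.
Lemma comp_out x : Defs.comp (@outseg D x) = Defs.comp (inseg x).
Proof. by apply/esym/comp_conn; rewrite -sn_in; exact: fconnect1. Qed.
Lemma comp_out1 c : Defs.comp (@out1 D c) = Defs.comp (in1 c). Proof. exact: (comp_out (c, false)). Qed.
Lemma comp_out2 c : Defs.comp (@out2 D c) = Defs.comp (in2 c). Proof. exact: (comp_out (c, true)). Qed.

Lemma sum_in_out (h : segment D -> C) : \sum_x h (inseg x) = \sum_x h (outseg x).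
Proof.
have e : [set inseg x | x in [set: crossing D * bool]] = [set outseg x | x in [set: crossing D * bool]].
  apply/setP => k; apply/imsetP/imsetP => [[x _ ->]|[x _ ->]].
    by have [y hy] := (ex_io (inseg x)).1 (ex_intro _ x erefl); exists y.
  by have [y hy] := (ex_io (outseg x)).2 (ex_intro _ x erefl); exists y.
transitivity (\sum_(k in [set inseg x | x in [set: crossing D * bool]]) h k).
  by rewrite big_imset /=; [apply: eq_bigl => x; rewrite inE | move=> x y _ _; exact: inj_in].
by rewrite e big_imset /=; [apply: eq_bigl => x; rewrite inE | move=> x y _ _; exact: inj_out].
Qed.

Lemma sum_pair (F : crossing D * bool -> C) : \sum_x F x = \sum_c (F (c, false) + F (c, true)).
Proof.
transitivity (\sum_c \sum_(s : bool) F (c, s)).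
  by rewrite pair_big; apply: eq_bigr => [[c s]] _.
by apply: eq_bigr => c _; rewrite big_bool addrC.
Qed.

Definition over (x : crossing D * bool) := if x.2 then ~~ positive x.1 else positive x.1.
Definition sg x : C := if over x then 1 else -1.

Lemma over_initE k : over_init k = [exists x, (outseg x == k) && over x].
Proof.
rewrite /over_init; apply/existsP/existsP => [[c /orP[]/andP[h1 h2]]|[[c s] /andP[h1 h2]]].
- by exists (c, false); rewrite /over /= h1 h2.
- by exists (c, true); rewrite /over /= h1 h2.
- by exists c; case: s h1 h2 => /= h1; rewrite /over /= => h2; rewrite h1 h2 /= ?orbT.
Qed.
Lemma under_initE k : under_init k = [exists x, (outseg x == k) && ~~ over x].
Proof.
rewrite /under_init; apply/existsP/existsP => [[c /orP[]/andP[h1 h2]]|[[c s] /andP[h1 h2]]].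
- by exists (c, false); rewrite /over /= h1 h2.
- by exists (c, true); rewrite /over /= h1 h2.
- by exists c; case: s h1 h2 => /= h1; rewrite /over /= ?negbK => h2; rewrite h1 h2 /= ?orbT.
Qed.
Lemma over_termE k : over_term k = [exists x, (inseg x == k) && over x].
Proof.
rewrite /over_term; apply/existsP/existsP => [[c /orP[]/andP[h1 h2]]|[[c s] /andP[h1 h2]]].
- by exists (c, false); rewrite /over /= h1 h2.
- by exists (c, true); rewrite /over /= h1 h2.
- by exists c; case: s h1 h2 => /= h1; rewrite /over /= => h2; rewrite h1 h2 /= ?orbT.
Qed.
Lemma under_termE k : under_term k = [exists x, (inseg x == k) && ~~ over x].
Proof.
rewrite /under_term; apply/existsP/existsP => [[c /orP[]/andP[h1 h2]]|[[c s] /andP[h1 h2]]].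
- by exists (c, false); rewrite /over /= h1 h2.
- by exists (c, true); rewrite /over /= h1 h2.
- by exists c; case: s h1 h2 => /= h1; rewrite /over /= ?negbK => h2; rewrite h1 h2 /= ?orbT.
Qed.

Lemma exists_unique (F : crossing D * bool -> segment D) (P : pred (crossing D * bool)) k x0 :
  injective F -> F x0 = k -> [exists x, (F x == k) && P x] = P x0.
Proof.
move=> inj hx0; apply/existsP/idP => [[x /andP[/eqP h hp]]|hp].
  by rewrite -(inj _ _ (etrans h (esym hx0))).
by exists x0; rewrite hx0 eqxx hp.
Qed.
Lemma exists_none (F : crossing D * bool -> segment D) (P : pred (crossing D * bool)) k :
  (forall x, F x != k) -> [exists x, (F x == k) && P x] = false.
Proof. by move=> h; apply/existsP => -[x /andP[hx _]]; move: (h x); rewrite hx. Qed.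
Lemma sum_unique (F : crossing D * bool -> segment D) k x0 (G : _ -> C) :
  injective F -> F x0 = k -> \sum_(x | F x == k) G x = G x0.
Proof.
move=> inj hx0; rewrite (big_pred1 x0) // => x /=.
apply/eqP/eqP => [h|->//]; exact: inj _ _ (etrans h (esym hx0)).
Qed.
Lemma sum_none (F : crossing D * bool -> segment D) k (G : _ -> C) :
  (forall x, F x != k) -> \sum_(x | F x == k) G x = 0.
Proof. by move=> h; rewrite big_pred0 // => x; apply/negbTE. Qed.

Lemma eta_so k : 2%:R * (Defs.eta k)%:~R =
  (\sum_(x | outseg x == k) sg x) - (\sum_(x | inseg x == k) sg x).
Proof.
case: (pickP (fun x => outseg x == k)) => [x0 /eqP hx0|hn].
  have [y0 hy0] : exists y, inseg y = k by apply/ex_io; exists x0.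
  rewrite (sum_unique _ inj_out hx0) (sum_unique _ inj_in hy0) /Defs.eta over_initE under_initE.
  rewrite over_termE under_termE !(exists_unique _ inj_out hx0) !(exists_unique _ inj_in hy0) /sg.
  by case: (over x0); case: (over y0) => /=; ring.
have hn' : forall x, inseg x != k.
  move=> y; apply/eqP => hy; have [x hx] := (ex_io k).1 (ex_intro _ y hy).
  by move: (hn x); rewrite hx eqxx.
have hn2 : forall x, outseg x != k by move=> x; rewrite hn.
rewrite !sum_none // /Defs.eta over_initE under_initE over_termE under_termE.
by rewrite !exists_none //= mulr0 subr0.
Qed.

Lemma sum_sg_out (G : segment D -> C) :
  \sum_x sg x * G (outseg x) = \sum_k (\sum_(x | outseg x == k) sg x) * G k.
Proof.
rewrite (partition_big (@outseg D) xpredT) //=; apply: eq_bigr => k _.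
by rewrite mulr_suml; apply: eq_bigr => x /eqP ->.
Qed.
Lemma sum_sg_in (G : segment D -> C) :
  \sum_x sg x * G (inseg x) = \sum_k (\sum_(x | inseg x == k) sg x) * G k.
Proof.
rewrite (partition_big (@inseg D) xpredT) //=; apply: eq_bigr => k _.
by rewrite mulr_suml; apply: eq_bigr => x /eqP ->.
Qed.

End Comb.

Section Glob.
Variable R : realType.
Variable D : diagram.
Local Notation C := R[i].
Implicit Types (c : crossing D) (k : segment D) (x y : crossing D * bool) (g : flattening R D).

Definition XN g c : C := @eps R D c * (fbeta g (out2 c) - fbeta g (in1 c)).
Definition XW g c : C := @eps R D c * (fbeta g (in2 c) - fbeta g (in1 c) - fmu g (Defs.comp (in1 c))).
Definition XS g c : C := @eps R D c * (fbeta g (in2 c) - fbeta g (out1 c)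
  + fmu g (Defs.comp (in2 c)) - fmu g (Defs.comp (in1 c))).
Definition XE g c : C := @eps R D c * (fbeta g (out2 c) - fbeta g (out1 c) + fmu g (Defs.comp (in2 c))).
Definition YN g c : C := fkappa g c - fgamma g (regN c).
Definition YW g c : C := fkappa g c - fgamma g (regW c) + @eps R D c * fmu g (Defs.comp (in1 c)).
Definition YS g c : C := fkappa g c - fgamma g (regS c)
  + @eps R D c * (fmu g (Defs.comp (in1 c)) - fmu g (Defs.comp (in2 c))).
Definition YE g c : C := fkappa g c - fgamma g (regE c) - @eps R D c * fmu g (Defs.comp (in2 c)).

Definition pr (A A' B B' : C) := A' * B - B' * A.

Variables f f' : flattening R D.

Definition Ec c := @eps R D c * (pr (YN f c) (YN f' c) (XN f c) (XN f' c)
  - pr (YW f c) (YW f' c) (XW f c) (XW f' c)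
  + pr (YS f c) (YS f' c) (XS f c) (XS f' c)
  - pr (YE f c) (YE f' c) (XE f c) (XE f' c)).

Definition hh k := pr (fbeta f k) (fbeta f' k) (fgamma f (lreg k) - fgamma f (rreg k))
  (fgamma f' (lreg k) - fgamma f' (rreg k)).
Definition gg k := pr (fgamma f (rreg k)) (fgamma f' (rreg k)) (fmu f (Defs.comp k)) (fmu f' (Defs.comp k)).
Definition qq k := pr (fbeta f k) (fbeta f' k) (fmu f (Defs.comp k)) (fmu f' (Defs.comp k)).

Definition Fx x := - hh (inseg x) + hh (outseg x) + (gg (outseg x) - gg (inseg x))
  + @sg R D x * (qq (outseg x) - qq (inseg x)).

Hypothesis HD : is_link_diagram D.

Lemma Ec_split c : Ec c = Fx (c, false) + Fx (c, true).
Proof.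
rewrite /Ec /Fx /hh /gg /qq /= (lreg_in2 HD) (rreg_out1 HD) (lreg_out2 HD) (rreg_out2 HD).
rewrite (comp_out1 HD) (comp_out2 HD) /XN /XW /XS /XE /YN /YW /YS /YE /pr /sg /over /eps /=.
rewrite /regN /regW /regS /regE.
by case: (positive c) => /=; ring.
Qed.

Lemma sum5 (a b c d e1 e2 : crossing D * bool -> C) :
  \sum_x (a x + b x + c x + - d x + (e1 x + - e2 x)) =
  \sum_x a x + \sum_x b x + \sum_x c x - \sum_x d x + (\sum_x e1 x - \sum_x e2 x).
Proof. by rewrite !big_split /= !sumrN. Qed.

Lemma sum_Ec : \sum_c Ec c = \sum_k 2%:R * (Defs.eta k)%:~R * qq k.
Proof.
rewrite (eq_bigr _ (fun c _ => Ec_split c)) -sum_pair.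
have E : forall x, Fx x = - hh (inseg x) + hh (outseg x) + gg (outseg x) + - gg (inseg x)
   + (@sg R D x * qq (outseg x) + - (@sg R D x * qq (inseg x))).
  by move=> x; rewrite /Fx; ring.
rewrite (eq_bigr _ (fun x _ => E x)) sum5 sumrN.
rewrite (sum_in_out HD hh) (sum_in_out HD gg) sum_sg_out sum_sg_in.
rewrite addNr add0r subrr add0r -sumrB.
by apply: eq_bigr => k _; rewrite (@eta_so R D HD) mulrBl.
Qed.

Lemma sum_rhs : \sum_j (ld_lambda f' j * ld_mu f j - ld_mu f' j * ld_lambda f j)
  = \sum_k (Defs.eta k)%:~R * qq k.
Proof.
rewrite [RHS](partition_big (@Defs.comp D) xpredT) //=.
apply: eq_bigr => j _; rewrite /ld_lambda /ld_mu.
transitivity (\sum_(k | Defs.comp k == j) (Defs.eta k)%:~R * fbeta f' k * fmu f j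
   - fmu f' j * \sum_(k | Defs.comp k == j) (Defs.eta k)%:~R * fbeta f k).
  by rewrite -mulr_suml; ring.
rewrite mulr_sumr -sumrB; apply: eq_bigr => k /eqP <-; rewrite /qq /pr; ring.
Qed.

End Glob.

Section T.
Variable F : fieldType.
Implicit Types x : F.
Variables (a1 a2 b1 b2 m1 m2 b1' b2' A Q : F).
Hypotheses (ha1 : a1 != 0) (ha2 : a2 != 0) (hb1 : b1 != 0) (hb2 : b2 != 0)
  (hm1 : m1 != 0) (hm2 : m2 != 0) (hA0 : A != 0) (hQ0 : Q != 0).

Lemma corner_pos :
  A = 1 - m1 * b1 / b2 * (1 - a1 / m1) * (1 - 1 / (m2 * a2)) ->
  Q = 1 - m2 * a2 * (1 - b2 / (m1 * b1)) ->
  b1' = m2 * b2 / m1 * Q^-1 ->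
  b2' = b1 * (1 - m1 / a1 * (1 - b2 / (m1 * b1))) ->
  1 - b2' / b1 != 0 ->
  [/\ (1 - b2' / b1)^-1 * a1^-1 * m1 * (1 - b2 * b1^-1 * m1^-1) = 1,
      (1 - b2' / b1)^-1 * (a2 * a1)^-1 * (m1 * m2^-1) * (1 - b2 / b1' * m2 / m1) = 1 &
      (1 - b2' / b1)^-1 * (a2 * A)^-1 * m2^-1 * (1 - b2' * b1'^-1 * m2) = 1].
Proof.
move=> eA eQ e1 e2 hd.
have hu : m1 * b1 - b2 != 0.
  move: hd; rewrite e2; apply: contra => /eqP h.
  have -> : b2 = m1 * b1 by apply/eqP; rewrite eq_sym -subr_eq0 h.
  by apply/eqP; field; rewrite ha1 hb1 hm1.
have hu' : a1 * b1 - (a1 * b1 - (m1 * b1 - b2)) != 0.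
  by rewrite (_ : _ - _ = m1 * b1 - b2) //; ring.
have hQ' : m1 * b1 - m2 * a2 * (m1 * b1 - b2) != 0.
  rewrite (_ : _ - _ = m1 * b1 * Q) ?mulf_neq0 // eQ; field; by rewrite hm1 hb1.
have hA' : b2 * (m2 * a2) - b1 * (m1 - a1) * (m2 * a2 - 1) != 0.
  rewrite (_ : _ - _ = b2 * (m2 * a2) * A) ?mulf_neq0 // eA; field; by rewrite hm1 hb2 hm2 ha2.
split.
- rewrite e2; field; rewrite ?ha1 ?ha2 ?hb1 ?hb2 ?hm1 ?hm2 ?hA0 ?hQ0 ?hu' ?hQ' ?hA' //.
- rewrite e1 e2 eQ; field; rewrite ?ha1 ?ha2 ?hb1 ?hb2 ?hm1 ?hm2 ?hA0 ?hQ0 ?hu' ?hQ' ?hA' //.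
- rewrite e1 e2 eQ eA; field; rewrite ?ha1 ?ha2 ?hb1 ?hb2 ?hm1 ?hm2 ?hA0 ?hQ0 ?hu' ?hQ' ?hA' //.
Qed.

Lemma corner_neg :
  b1' != 0 ->
  A = 1 - b2 / (m1 * b1) * (1 - m1 * a1) * (1 - m2 / a2) ->
  Q = 1 - 1 / (m1 * a1) * (1 - m1 * b1 / b2) ->
  b1' = m2 * b2 / m1 * (1 - a2 / m2 * (1 - m1 * b1 / b2)) ->
  b2' = b1 * Q^-1 ->
  1 - (b2' / b1)^-1 != 0 ->
  [/\ (1 - (b2' / b1)^-1)^-1 * a1^-1 * m1^-1 * (1 - (b2 / b1 / m1)^-1) = 1,
      (1 - (b2' / b1)^-1)^-1 * (a2 * a1)^-1 * (m1 / m2)^-1 * (1 - (b2 / b1' * m2 / m1)^-1) = 1 &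
      (1 - (b2' / b1)^-1)^-1 * (a2 * A)^-1 * (m2^-1)^-1 * (1 - (b2' / b1' * m2)^-1) = 1].
Proof.
move=> hb1' eA eQ e1 e2 hd.
have hu : b2 - m1 * b1 != 0.
  move: hd; rewrite e2 eQ; apply: contra => /eqP h.
  have -> : b2 = m1 * b1 by apply/eqP; rewrite -subr_eq0 h.
  by apply/eqP; field; rewrite ha1 hb1 hm1.
have hu' : m1 * a1 * b2 - (m1 * a1 * b2 - (b2 - m1 * b1)) != 0.
  by rewrite (_ : _ - _ = b2 - m1 * b1) //; ring.
have hQ' : m1 * a1 * b2 - (b2 - m1 * b1) != 0.
  rewrite (_ : _ - _ = m1 * a1 * b2 * Q) ?mulf_neq0 // eQ; field; by rewrite hm1 ha1 hb2.
have hA' : m1 * b1 * a2 - b2 * (1 - m1 * a1) * (a2 - m2) != 0.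
  rewrite (_ : _ - _ = m1 * b1 * a2 * A) ?mulf_neq0 // eA; field; by rewrite hm1 hb1 ha2.
have hB' : m2 * b2 - a2 * (b2 - m1 * b1) != 0.
  have E : b1' * m1 = m2 * b2 - a2 * (b2 - m1 * b1).
    by rewrite e1; field; rewrite hm1 hm2 hb2.
  by rewrite -E mulf_neq0.
split.
- rewrite e2 eQ; field; rewrite ?ha1 ?ha2 ?hb1 ?hb2 ?hm1 ?hm2 ?hA0 ?hQ0 ?hu ?hu' ?hQ' ?hA' ?hB' ?oner_neq0 //.
- rewrite e1 e2 eQ; field; rewrite ?ha1 ?ha2 ?hb1 ?hb2 ?hm1 ?hm2 ?hA0 ?hQ0 ?hu ?hu' ?hQ' ?hA' ?hB' ?oner_neq0 //.
- rewrite e1 e2 eQ eA; field; rewrite ?ha1 ?ha2 ?hb1 ?hb2 ?hm1 ?hm2 ?hA0 ?hQ0 ?hu ?hu' ?hQ' ?hA' ?hB' ?oner_neq0 //.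
Qed.

Lemma pin_pos : b1 = b1 * (1 - m1 / a1 * (1 - b2 / (m1 * b1))) ->
  b1' = m2 * b2 / m1 * (1 - m2 * a2 * (1 - b2 / (m1 * b1)))^-1 ->
  b2 = m1 * b1 /\ m2 * b2 = m1 * b1'.
Proof.
move=> E e1.
have h0 : (m1 * b1 - b2) / a1 = 0.
  have -> : (m1 * b1 - b2) / a1 = b1 - b1 * (1 - m1 / a1 * (1 - b2 / (m1 * b1))).
    by field; rewrite hm1 hb1 ha1.
  by rewrite -E subrr.
have hb : b2 = m1 * b1.
  by move/eqP: h0; rewrite mulf_eq0 invr_eq0 (negbTE ha1) orbF subr_eq0 => /eqP <-.
split => //; rewrite e1 hb; field; by rewrite hm1 hb1 oner_neq0.
Qed.

Lemma pin_neg : b1 = b1 * (1 - 1 / (m1 * a1) * (1 - m1 * b1 / b2))^-1 ->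
  b1' = m2 * b2 / m1 * (1 - a2 / m2 * (1 - m1 * b1 / b2)) ->
  b2 = m1 * b1 /\ m2 * b2 = m1 * b1'.
Proof.
move=> E e1.
have hQ : (1 - 1 / (m1 * a1) * (1 - m1 * b1 / b2))^-1 = 1.
  by apply: (mulfI hb1); rewrite -E mulr1.
have h0 : (b2 - m1 * b1) / (m1 * a1 * b2) = 0.
  have -> : (b2 - m1 * b1) / (m1 * a1 * b2) = 1 - (1 - 1 / (m1 * a1) * (1 - m1 * b1 / b2)).
    by field; rewrite hm1 ha1 hb2.
  by rewrite -[X in 1 - X]invrK hQ invr1 subrr.
have hb : b2 = m1 * b1.
  move/eqP: h0; rewrite mulf_eq0 invr_eq0 (negbTE (mulf_neq0 (mulf_neq0 hm1 ha1) hb2)) orbF subr_eq0 => /eqP //.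
split => //; rewrite e1 hb; field; by rewrite hm1 hb1 hm2.
Qed.
End T.

Section P.
Variable R : realType.
Local Notation C := R[i].

Definition isZ (x : C) := exists n : int, x = n%:~R.
Lemma isZ_int (n : int) : isZ n%:~R. Proof. by exists n. Qed.
Lemma isZ0 : isZ 0. Proof. by exists 0. Qed.
Lemma isZ1 : isZ 1. Proof. by exists 1. Qed.
Lemma isZD x y : isZ x -> isZ y -> isZ (x + y).
Proof. by move=> [m ->] [n ->]; exists (m + n); rewrite intrD. Qed.
Lemma isZN x : isZ x -> isZ (- x).
Proof. by move=> [m ->]; exists (- m); rewrite intrN. Qed.
Lemma isZB x y : isZ x -> isZ y -> isZ (x - y).
Proof. by move=> hx hy; apply: isZD => //; apply: isZN. Qed.
Lemma isZM x y : isZ x -> isZ y -> isZ (x * y).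
Proof. by move=> [m ->] [n ->]; exists (m * n); rewrite intrM. Qed.

Lemma e2piE (x : C) : e2pi x = cexp (Tc R * x). Proof. by []. Qed.
Lemma e2piD (x y : C) : e2pi (x + y) = e2pi x * e2pi y.
Proof. by rewrite !e2piE mulrDr cexpD. Qed.
Lemma e2piN (x : C) : e2pi (- x) = (e2pi x)^-1.
Proof. by rewrite !e2piE mulrN cexpN. Qed.
Lemma e2piB (x y : C) : e2pi (x - y) = e2pi x / e2pi y.
Proof. by rewrite e2piD e2piN. Qed.
Lemma e2pi_neq0 (x : C) : e2pi x != 0. Proof. exact: cexp_neq0. Qed.
Lemma e2pi_isZ (x : C) : isZ x -> e2pi x = 1.
Proof. by move=> [n ->]; rewrite e2piE cexpTint. Qed.
Lemma e2pi_eq1 (x : C) : e2pi x = 1 -> isZ x.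
Proof.
rewrite e2piE => /cexp_eq1 [n hn]; exists n.
by apply: (mulfI (Tc_neq0 R)).
Qed.
Lemma e2pi_eqZ (x y : C) : e2pi x = e2pi y -> isZ (x - y).
Proof. by move=> h; apply: e2pi_eq1; rewrite e2piB h divff // e2pi_neq0. Qed.
Lemma e2pi_Zeq (x y : C) : isZ (x - y) -> e2pi x = e2pi y.
Proof.
move=> h; have := e2pi_isZ h; rewrite e2piB => /eqP.
by rewrite -[X in _ == X](divff (e2pi_neq0 y)) -subr_eq0 -mulrBl mulf_eq0 invr_eq0 (negbTE (e2pi_neq0 y)) orbF subr_eq0 => /eqP.
Qed.

Lemma p0Z (z : C) : isZ ((z - cLog (cexp z)) / Tc R).
Proof.
have h : cexp (z - cLog (cexp z)) = 1.
  by rewrite cexpD cexpN cexpK ?cexp_neq0 // divff // cexp_neq0.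
have [n hn] := cexp_eq1 h; exists n; rewrite hn mulrC mulKf //; exact: Tc_neq0.
Qed.
Lemma p1Z (z w : C) : cexp z * (1 - w) = 1 -> isZ ((z + cLog (1 - w)) / Tc R).
Proof.
move=> h; have hw : 1 - w != 0 by apply: contra_eqN h => /eqP ->; rewrite mulr0 eq_sym oner_eq0.
have h' : cexp (z + cLog (1 - w)) = 1 by rewrite cexpD cexpK.
have [n hn] := cexp_eq1 h'; exists n; rewrite hn mulrC mulKf //; exact: Tc_neq0.
Qed.

Lemma iC2 : iC R ^+ 2 = -1.
Proof. apply/eqP; rewrite eq_complex /=; apply/andP; split; apply/eqP; ring. Qed.

Lemma Tc2 : Tc R ^+ 2 = - 4%:R * piC R ^+ 2.
Proof. by rewrite /Tc !exprMn iC2; ring. Qed.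

Lemma Ldiff (X Y X' Y' : C) : cexp (Tc R * X') = cexp (Tc R * X) ->
  Ldilog (Tc R * X') (Tc R * Y') - Ldilog (Tc R * X) (Tc R * Y) =
  Tc R ^+ 2 / 2%:R * ((X' - X) * ((Tc R * Y + cLog (1 - cexp (Tc R * X))) / Tc R)
     - (Y' - Y) * ((Tc R * X - cLog (cexp (Tc R * X))) / Tc R) + (Y' * X - X' * Y)).
Proof.
move=> h; rewrite /Ldilog h.
have hT := Tc_neq0 R.
rewrite /Tc in hT *.
field.
by move: hT; rewrite !mulf_eq0 !negb_or => /andP[/andP[_ ->] ->].
Qed.

End P.

Section M1.
Variable R : realType.
Local Notation C := R[i].

Definition prf (A A' B B' : C) := A' * B - B' * A.

Definition PIf (e b1 b2 b1p b2p m1 m2 gN gW gS gE : C) : C :=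
  b1 * (gW - gN) - b1p * (gS - gE) + b2 * (gS - gW) - b2p * (gE - gN)
  - m1 * (e * (b1 - b1p + m2) + gS - gW) - m2 * (e * (b2p - b2 + m1) + gE - gS).

Definition Ecf (e b1 b2 b1p b2p m1 m2 gN gW gS gE k b1' b2' b1p' b2p' m1' m2' gN' gW' gS' gE' k' : C) : C :=
  e * (prf (k - gN) (k' - gN') (e * (b2p - b1)) (e * (b2p' - b1'))
     - prf (k - gW + e * m1) (k' - gW' + e * m1') (e * (b2 - b1 - m1)) (e * (b2' - b1' - m1'))
     + prf (k - gS + e * (m1 - m2)) (k' - gS' + e * (m1' - m2')) (e * (b2 - b1p + m2 - m1)) (e * (b2' - b1p' + m2' - m1'))
     - prf (k - gE - e * m2) (k' - gE' - e * m2') (e * (b2p - b1p + m2)) (e * (b2p' - b1p' + m2'))).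

Lemma pin_alg (e b1 b2 b1p b2p m1 m2 gN gW gS gE k b1' b2' b1p' b2p' m1' m2' gN' gW' gS' gE' k' : C)
  (u1 u2 u3 DB1 DB2 DB1p DB2p DM1 DM2 g1 g2 g3 : int) :
  e = 1 \/ e = -1 ->
  b2p = b1 + u1%:~R -> b2 = b1 + m1 + u2%:~R -> b1p = b1 + m2 + u2%:~R - u3%:~R ->
  b1' = b1 + DB1%:~R -> b2' = b2 + DB2%:~R -> b1p' = b1p + DB1p%:~R -> b2p' = b2p + DB2p%:~R ->
  m1' = m1 + DM1%:~R -> m2' = m2 + DM2%:~R ->
  gW' = gW + (gN' - gN) + g1%:~R -> gS' = gS + (gN' - gN) + g1%:~R + g2%:~R ->
  gE' = gE + (gN' - gN) + g1%:~R + g2%:~R + g3%:~R ->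
  exists n : int,
    PIf e b1' b2' b1p' b2p' m1' m2' gN' gW' gS' gE' - PIf e b1 b2 b1p b2p m1 m2 gN gW gS gE
    - Ecf e b1 b2 b1p b2p m1 m2 gN gW gS gE k b1' b2' b1p' b2p' m1' m2' gN' gW' gS' gE' k'
    = n%:~R.
Proof.
move=> he -> -> -> -> -> -> -> -> -> -> -> ->.
rewrite /PIf /Ecf /prf.
case: he => ->.
  by exists ( (-1 * DB1*DM1) + (1 * DB1*g1) + (1 * DB1p*DM1) + (1 * DB1p*g3) + (1 * DB2*DM2) + (1 * DB2*g2) + (-1 * DB2p*DM2) + (-1 * DB2p*g1) + (-1 * DB2p*g2) + (-1 * DB2p*g3) + (-2 * DM1*DM2) + (-1 * DM1*g2) + (2 * DM1*u2) + (-2 * DM1*u3) + (-1 * DM2*g3) + (-2 * DM2*u1) + (2 * DM2*u2) + (-2 * g1*u1) + (-2 * g2*u1) + (2 * g2*u2) + (-2 * g3*u1) + (2 * g3*u2) + (-2 * g3*u3)); rewrite !intrD !intrM; ring.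
by exists ( (1 * DB1*DM1) + (1 * DB1*g1) + (-1 * DB1p*DM1) + (1 * DB1p*g3) + (-1 * DB2*DM2) + (1 * DB2*g2) + (1 * DB2p*DM2) + (-1 * DB2p*g1) + (-1 * DB2p*g2) + (-1 * DB2p*g3) + (2 * DM1*DM2) + (-1 * DM1*g2) + (-2 * DM1*u2) + (2 * DM1*u3) + (-1 * DM2*g3) + (2 * DM2*u1) + (-2 * DM2*u2) + (-2 * g1*u1) + (-2 * g2*u1) + (2 * g2*u2) + (-2 * g3*u1) + (2 * g3*u2) + (-2 * g3*u3)); rewrite !intrD !intrM; ring.
Qed.

End M1.

Section Main.
Variable R : realType.
Local Notation C := R[i].
Variable D : diagram.
Hypothesis HD : is_link_diagram D.
Variables (a b : segment D -> C) (m : component D -> C).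
Hypothesis Hchi : is_shaping a b m.
Implicit Types (c : crossing D) (k : segment D) (g : flattening R D).

Definition epow c (z : C) := if positive c then z else z^-1.
Lemma e2pi_eps c (x : C) : e2pi (@eps R D c * x) = epow c (e2pi x).
Proof. by rewrite /eps /epow; case: (positive c); rewrite ?mul1r ?mulN1r ?e2piN. Qed.

Lemma cv_np g c : ~~ pinched b c -> crossing_volume b g c =
  - iC R * @eps R D c * (Ldilog (Tc R * XN g c) (Tc R * YN g c) - Ldilog (Tc R * XW g c) (Tc R * YW g c)
    + Ldilog (Tc R * XS g c) (Tc R * YS g c) - Ldilog (Tc R * XE g c) (Tc R * YE g c)).
Proof.
move=> h; rewrite /crossing_volume (negbTE h) /XN /XW /XS /XE /YN /YW /YS /YE /Tc !mulrA //.
Qed.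

Lemma cv_pin g c : pinched b c -> crossing_volume b g c =
  2%:R * piC R ^+ 2 * iC R * PIf (@eps R D c) (fbeta g (in1 c)) (fbeta g (in2 c)) (fbeta g (out1 c))
    (fbeta g (out2 c)) (fmu g (Defs.comp (in1 c))) (fmu g (Defs.comp (in2 c)))
    (fgamma g (regN c)) (fgamma g (regW c)) (fgamma g (regS c)) (fgamma g (regE c)).
Proof. by move=> h; rewrite /crossing_volume h. Qed.


Lemma isZ_shift (x' x : C) : isZ (x' - x) -> exists n : int, x' = x + n%:~R.
Proof. by move=> [n hn]; exists n; rewrite -hn; ring. Qed.

Lemma Tc2half : Tc R ^+ 2 / 2%:R = - 2%:R * piC R ^+ 2.
Proof. by rewrite Tc2; field. Qed.

Variables f f' : flattening R D.
Hypotheses (Hf : is_flattening a b m f) (Hf' : is_flattening a b m f').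

Lemma dB k : isZ (fbeta f' k - fbeta f k).
Proof. by apply: e2pi_eqZ; case: Hf => _ [-> _]; case: Hf' => _ [-> _]. Qed.
Lemma dM j : isZ (fmu f' j - fmu f j).
Proof. by apply: e2pi_eqZ; case: Hf => [-> _]; case: Hf' => [-> _]. Qed.
Lemma dG k : isZ ((fgamma f' (rreg k) - fgamma f' (lreg k)) - (fgamma f (rreg k) - fgamma f (lreg k))).
Proof. by apply: e2pi_eqZ; case: Hf => _ [_ [-> _]]; case: Hf' => _ [_ [-> _]]. Qed.

Lemma isZ_eps c : isZ (@eps R D c).
Proof. by rewrite /eps; case: (positive c); [exact: isZ1 | apply/isZN/isZ1]. Qed.

Lemma G1 c : isZ ((fgamma f' (regW c) - fgamma f' (regN c)) - (fgamma f (regW c) - fgamma f (regN c))).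
Proof. exact: dG (in1 c). Qed.
Lemma G2 c : isZ ((fgamma f' (regS c) - fgamma f' (regW c)) - (fgamma f (regS c) - fgamma f (regW c))).
Proof. by have := dG (in2 c); rewrite (lreg_in2 HD). Qed.
Lemma G3 c : isZ ((fgamma f' (regS c) - fgamma f' (regE c)) - (fgamma f (regS c) - fgamma f (regE c))).
Proof. by have := dG (out1 c); rewrite (rreg_out1 HD). Qed.

Lemma dXs c : [/\ isZ (XN f' c - XN f c), isZ (XW f' c - XW f c), isZ (XS f' c - XS f c)
   & isZ (XE f' c - XE f c)].
Proof.
have ze := isZ_eps c.
split.
- have -> : XN f' c - XN f c = @eps R D c * ((fbeta f' (out2 c) - fbeta f (out2 c)) - (fbeta f' (in1 c) - fbeta f (in1 c))).
    by rewrite /XN; ring.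
  by apply: isZM => //; apply: isZB; apply: dB.
- have -> : XW f' c - XW f c = @eps R D c * ((fbeta f' (in2 c) - fbeta f (in2 c)) - (fbeta f' (in1 c) - fbeta f (in1 c))
     - (fmu f' (Defs.comp (in1 c)) - fmu f (Defs.comp (in1 c)))).
    by rewrite /XW; ring.
  by apply: isZM => //; apply: isZB; [apply: isZB; apply: dB | apply: dM].
- have -> : XS f' c - XS f c = @eps R D c * ((fbeta f' (in2 c) - fbeta f (in2 c)) - (fbeta f' (out1 c) - fbeta f (out1 c))
     + (fmu f' (Defs.comp (in2 c)) - fmu f (Defs.comp (in2 c)))
     - (fmu f' (Defs.comp (in1 c)) - fmu f (Defs.comp (in1 c)))).
    by rewrite /XS; ring.
  by apply: isZM => //; apply: isZB; [apply: isZD; [apply: isZB; apply: dB | apply: dM] | apply: dM].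
- have -> : XE f' c - XE f c = @eps R D c * ((fbeta f' (out2 c) - fbeta f (out2 c)) - (fbeta f' (out1 c) - fbeta f (out1 c))
     + (fmu f' (Defs.comp (in2 c)) - fmu f (Defs.comp (in2 c)))).
    by rewrite /XE; ring.
  by apply: isZM => //; apply: isZD; [apply: isZB; apply: dB | apply: dM].
Qed.


Ltac zc := repeat (first [ assumption | apply: isZD | apply: isZM | apply: isZN ]).

Lemma np_cross c : ~~ pinched b c -> exists n : int,
  crossing_volume b f' c - crossing_volume b f c = 2%:R * piC R ^+ 2 * iC R * (Ec f f' c + n%:~R).
Proof.
move=> hp.
have [hmu [hbeta [hgam hkap]]] := Hf.
have [hab [hm0 hsh]] := Hchi; have {hsh} hsh := hsh c.
set r := b (out2 c) / b (in1 c).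
set den := 1 - (if positive c then r else r^-1).
have hYN : forall g, is_flattening a b m g -> e2pi (YN g c) = den^-1.
  move=> g [_ [_ [_ hk]]]; rewrite /YN e2piB; move: (hk c hp) => /= ->.
  by rewrite -/r -/den mulrAC divff ?e2pi_neq0 // mul1r.
have hden : den != 0.
  apply/negP => /eqP h0; have := e2pi_neq0 (fkappa f c).
  by move: (hkap c hp) => /= ->; rewrite -/r -/den h0 invr0 mulr0 eqxx.
have dYN : isZ (YN f' c - YN f c) by apply: e2pi_eqZ; rewrite (hYN f') // (hYN f).
have [dXN dXW dXS dXE] := dXs c.
have ze := isZ_eps c.
have g1 := G1 c; have g2 := G2 c; have g3 := G3 c.
have dM1 := dM (Defs.comp (in1 c)); have dM2 := dM (Defs.comp (in2 c)).
have dYW : isZ (YW f' c - YW f c).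
  have -> : YW f' c - YW f c = (YN f' c - YN f c)
     - ((fgamma f' (regW c) - fgamma f' (regN c)) - (fgamma f (regW c) - fgamma f (regN c)))
     + @eps R D c * (fmu f' (Defs.comp (in1 c)) - fmu f (Defs.comp (in1 c))).
    by rewrite /YW /YN; ring.
  by zc.
have dYS : isZ (YS f' c - YS f c).
  have -> : YS f' c - YS f c = (YN f' c - YN f c)
     - (((fgamma f' (regW c) - fgamma f' (regN c)) - (fgamma f (regW c) - fgamma f (regN c)))
       + ((fgamma f' (regS c) - fgamma f' (regW c)) - (fgamma f (regS c) - fgamma f (regW c))))
     + @eps R D c * ((fmu f' (Defs.comp (in1 c)) - fmu f (Defs.comp (in1 c)))
                   - (fmu f' (Defs.comp (in2 c)) - fmu f (Defs.comp (in2 c)))).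
    by rewrite /YS /YN; ring.
  by zc.
have dYE : isZ (YE f' c - YE f c).
  have -> : YE f' c - YE f c = (YN f' c - YN f c)
     - (((fgamma f' (regW c) - fgamma f' (regN c)) - (fgamma f (regW c) - fgamma f (regN c)))
       + ((fgamma f' (regS c) - fgamma f' (regW c)) - (fgamma f (regS c) - fgamma f (regW c)))
       - ((fgamma f' (regS c) - fgamma f' (regE c)) - (fgamma f (regS c) - fgamma f (regE c))))
     - @eps R D c * (fmu f' (Defs.comp (in2 c)) - fmu f (Defs.comp (in2 c))).
    by rewrite /YE /YN; ring.
  by zc.
have hwN : cexp (Tc R * XN f' c) = cexp (Tc R * XN f c) := e2pi_Zeq dXN.
have hwW : cexp (Tc R * XW f' c) = cexp (Tc R * XW f c) := e2pi_Zeq dXW.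
have hwS : cexp (Tc R * XS f' c) = cexp (Tc R * XS f c) := e2pi_Zeq dXS.
have hwE : cexp (Tc R * XE f' c) = cexp (Tc R * XE f c) := e2pi_Zeq dXE.
have gW : e2pi (fgamma f (regW c) - fgamma f (regN c)) = a (in1 c) := hgam (in1 c).
have gS : e2pi (fgamma f (regS c) - fgamma f (regW c)) = a (in2 c).
  by have := hgam (in2 c); rewrite (lreg_in2 HD).
have gE : e2pi (fgamma f (regE c) - fgamma f (regN c)) = a (out2 c).
  by have := hgam (out2 c); rewrite (rreg_out2 HD) (lreg_out2 HD).
have eXN : e2pi (XN f c) = epow c r by rewrite /XN e2pi_eps e2piB !hbeta.
have eXW : e2pi (XW f c) = epow c (b (in2 c) / b (in1 c) / m (Defs.comp (in1 c))).
  by rewrite /XW e2pi_eps !e2piB !hbeta hmu.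
have eXS : e2pi (XS f c) = epow c (b (in2 c) / b (out1 c) * m (Defs.comp (in2 c)) / m (Defs.comp (in1 c))).
  by rewrite /XS e2pi_eps e2piB e2piD e2piB !hbeta !hmu.
have eXE : e2pi (XE f c) = epow c (b (out2 c) / b (out1 c) * m (Defs.comp (in2 c))).
  by rewrite /XE e2pi_eps e2piD e2piB !hbeta !hmu.
have eYW : e2pi (YW f c) = den^-1 / a (in1 c) * epow c (m (Defs.comp (in1 c))).
  have -> : YW f c = YN f c - (fgamma f (regW c) - fgamma f (regN c)) + @eps R D c * fmu f (Defs.comp (in1 c)).
    by rewrite /YW /YN; ring.
  by rewrite e2piD e2piB (hYN f Hf) gW e2pi_eps hmu.
have eYS : e2pi (YS f c) = den^-1 / (a (in2 c) * a (in1 c)) * epow c (m (Defs.comp (in1 c)) / m (Defs.comp (in2 c))).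
  have -> : YS f c = YN f c - ((fgamma f (regS c) - fgamma f (regW c)) + (fgamma f (regW c) - fgamma f (regN c)))
      + @eps R D c * (fmu f (Defs.comp (in1 c)) - fmu f (Defs.comp (in2 c))).
    by rewrite /YS /YN; ring.
  by rewrite e2piD e2piB (hYN f Hf) e2piD gS gW e2pi_eps e2piB !hmu.
have eYE : e2pi (YE f c) = den^-1 / a (out2 c) / epow c (m (Defs.comp (in2 c))).
  have -> : YE f c = YN f c - (fgamma f (regE c) - fgamma f (regN c)) - @eps R D c * fmu f (Defs.comp (in2 c)).
    by rewrite /YE /YN; ring.
  by rewrite e2piD e2piB e2piN (hYN f Hf) gE e2pi_eps hmu.
have ha1 := (hab (in1 c)).1; have ha2 := (hab (in2 c)).1.
have hb1 := (hab (in1 c)).2; have hb2 := (hab (in2 c)).2; have hb1' := (hab (out1 c)).2.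
have hm1 := hm0 (Defs.comp (in1 c)); have hm2 := hm0 (Defs.comp (in2 c)).
have cN : e2pi (YN f c) * (1 - e2pi (XN f c)) = 1 by rewrite (hYN f Hf) eXN /epow -/den mulVf.
have [cW cS cE] : [/\ e2pi (YW f c) * (1 - e2pi (XW f c)) = 1,
    e2pi (YS f c) * (1 - e2pi (XS f c)) = 1 & e2pi (YE f c) * (1 - e2pi (XE f c)) = 1].
  rewrite eYW eXW eYS eXS eYE eXE.
  move: hsh hden; rewrite /den /r /epow; case: (positive c) => /=.
  - move=> [hA hQ ea1 ea2 [eb1 eb2]] hd; rewrite ea2.
    exact: (corner_pos ha1 ha2 hb1 hb2 hm1 hm2 hA hQ erefl erefl eb1 eb2 hd).
  - move=> [hA hQ ea1 ea2 [eb1 eb2]] hd; rewrite ea2.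
    exact: (corner_neg ha1 ha2 hb1 hb2 hm1 hm2 hA hQ hb1' erefl erefl eb1 eb2 hd).
have p1N : isZ ((Tc R * YN f c + cLog (1 - cexp (Tc R * XN f c))) / Tc R) := p1Z cN.
have p1W : isZ ((Tc R * YW f c + cLog (1 - cexp (Tc R * XW f c))) / Tc R) := p1Z cW.
have p1S : isZ ((Tc R * YS f c + cLog (1 - cexp (Tc R * XS f c))) / Tc R) := p1Z cS.
have p1E : isZ ((Tc R * YE f c + cLog (1 - cexp (Tc R * XE f c))) / Tc R) := p1Z cE.
have p0N : isZ ((Tc R * XN f c - cLog (cexp (Tc R * XN f c))) / Tc R) := p0Z _.
have p0W : isZ ((Tc R * XW f c - cLog (cexp (Tc R * XW f c))) / Tc R) := p0Z _.
have p0S : isZ ((Tc R * XS f c - cLog (cexp (Tc R * XS f c))) / Tc R) := p0Z _.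
have p0E : isZ ((Tc R * XE f c - cLog (cexp (Tc R * XE f c))) / Tc R) := p0Z _.
have hN := @Ldiff R (XN f c) (YN f c) (XN f' c) (YN f' c) hwN.
have hW := @Ldiff R (XW f c) (YW f c) (XW f' c) (YW f' c) hwW.
have hS := @Ldiff R (XS f c) (YS f c) (XS f' c) (YS f' c) hwS.
have hE := @Ldiff R (XE f c) (YE f c) (XE f' c) (YE f' c) hwE.
rewrite (cv_np f' hp) (cv_np f hp).
have E : forall (e LN LW LS LE LN' LW' LS' LE' : C),
   - iC R * e * (LN' - LW' + LS' - LE') - - iC R * e * (LN - LW + LS - LE) =
   - iC R * e * ((LN' - LN) - (LW' - LW) + (LS' - LS) - (LE' - LE)).
  by move=> *; ring.
rewrite E hN hW hS hE Tc2half.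
have Zn : isZ (@eps R D c * (
   ((XN f' c - XN f c) * ((Tc R * YN f c + cLog (1 - cexp (Tc R * XN f c))) / Tc R)
     - (YN f' c - YN f c) * ((Tc R * XN f c - cLog (cexp (Tc R * XN f c))) / Tc R))
 - ((XW f' c - XW f c) * ((Tc R * YW f c + cLog (1 - cexp (Tc R * XW f c))) / Tc R)
     - (YW f' c - YW f c) * ((Tc R * XW f c - cLog (cexp (Tc R * XW f c))) / Tc R))
 + ((XS f' c - XS f c) * ((Tc R * YS f c + cLog (1 - cexp (Tc R * XS f c))) / Tc R)
     - (YS f' c - YS f c) * ((Tc R * XS f c - cLog (cexp (Tc R * XS f c))) / Tc R))
 - ((XE f' c - XE f c) * ((Tc R * YE f c + cLog (1 - cexp (Tc R * XE f c))) / Tc R)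
     - (YE f' c - YE f c) * ((Tc R * XE f c - cLog (cexp (Tc R * XE f c))) / Tc R)))).
  by zc.
case: Zn => n hn; exists n; rewrite -hn /Ec /pr; ring.
Qed.

Lemma pin_cross c : pinched b c -> exists n : int,
  crossing_volume b f' c - crossing_volume b f c = 2%:R * piC R ^+ 2 * iC R * (Ec f f' c + n%:~R).
Proof.
move=> hp.
have [hmu [hbeta _]] := Hf.
have [hab [hm0 hsh]] := Hchi; have {hsh} hsh := hsh c.
have ha1 := (hab (in1 c)).1.
have hb1 := (hab (in1 c)).2; have hb2 := (hab (in2 c)).2; have hb1' := (hab (out1 c)).2.
have hm1 := hm0 (Defs.comp (in1 c)); have hm2 := hm0 (Defs.comp (in2 c)).
have hp' : b (out2 c) = b (in1 c) by apply/eqP.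
have [eb2 eb1'] : b (in2 c) = m (Defs.comp (in1 c)) * b (in1 c) /\
    m (Defs.comp (in2 c)) * b (in2 c) = m (Defs.comp (in1 c)) * b (out1 c).
  move: hsh; case: (positive c) => /= [[_ _ _ _ [e1 e2]]|[_ _ _ _ [e1 e2]]].
    by apply: (pin_pos ha1 hb1 hm1 _ e1); rewrite -{1}hp' e2.
  by apply: (pin_neg ha1 hb1 hb2 hm1 hm2 _ e1); rewrite -{1}hp' e2.
have u1 : isZ (fbeta f (out2 c) - fbeta f (in1 c)) by apply: e2pi_eqZ; rewrite !hbeta.
have [U2 h2] : isZ (fbeta f (in2 c) - fbeta f (in1 c) - fmu f (Defs.comp (in1 c))).
  apply: e2pi_eq1; rewrite !e2piB !hbeta hmu eb2; field; by rewrite hm1 hb1.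
have [U3 h3] : isZ (fbeta f (in2 c) - fbeta f (out1 c) + fmu f (Defs.comp (in2 c)) - fmu f (Defs.comp (in1 c))).
  apply: e2pi_eq1; rewrite e2piB e2piD e2piB !hbeta !hmu.
  rewrite (_ : _ / _ * _ / _ = (m (Defs.comp (in2 c)) * b (in2 c)) / (m (Defs.comp (in1 c)) * b (out1 c))).
    by rewrite eb1' divff // mulf_neq0.
  by field; rewrite hm1 hb1'.
have [U1 hU1] := isZ_shift u1.
have hU2 : fbeta f (in2 c) = fbeta f (in1 c) + fmu f (Defs.comp (in1 c)) + U2%:~R by rewrite -h2; ring.
have hU3 : fbeta f (out1 c) = fbeta f (in1 c) + fmu f (Defs.comp (in2 c)) + U2%:~R - U3%:~R.
  by rewrite -h2 -h3; ring.
have [DB1 hDB1] := isZ_shift (dB (in1 c)).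
have [DB2 hDB2] := isZ_shift (dB (in2 c)).
have [DB1p hDB1p] := isZ_shift (dB (out1 c)).
have [DB2p hDB2p] := isZ_shift (dB (out2 c)).
have [DM1 hDM1] := isZ_shift (dM (Defs.comp (in1 c))).
have [DM2 hDM2] := isZ_shift (dM (Defs.comp (in2 c))).
have [n1 h1] := G1 c; have [n2 h2'] := G2 c; have [n3 h3'] := G3 c.
have hg1 : fgamma f' (regW c) = fgamma f (regW c) + (fgamma f' (regN c) - fgamma f (regN c)) + n1%:~R.
  by rewrite -h1; ring.
have hg2 : fgamma f' (regS c) = fgamma f (regS c) + (fgamma f' (regN c) - fgamma f (regN c)) + n1%:~R + n2%:~R.
  by rewrite -h1 -h2'; ring.
have hg3 : fgamma f' (regE c) = fgamma f (regE c) + (fgamma f' (regN c) - fgamma f (regN c))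
    + n1%:~R + n2%:~R + (- n3)%:~R.
  by rewrite intrN -h1 -h2' -h3'; ring.
have he : @eps R D c = 1 \/ @eps R D c = -1 by rewrite /eps; case: (positive c); [left | right].
have [n hn] := pin_alg (fkappa f c) (fkappa f' c) he hU1 hU2 hU3 hDB1 hDB2 hDB1p hDB2p
  hDM1 hDM2 hg1 hg2 hg3.
exists n; rewrite (cv_pin f' hp) (cv_pin f hp) -hn /Ec /Ecf /pr /prf /XN /XW /XS /XE /YN /YW /YS /YE.
ring.
Qed.

Lemma cross c : exists n : int,
  crossing_volume b f' c - crossing_volume b f c = 2%:R * piC R ^+ 2 * iC R * (Ec f f' c + n%:~R).
Proof. by case: (boolP (pinched b c)) => h; [apply: pin_cross | apply: np_cross]. Qed.

End Main.

Lemma isZ_sum (R : realType) (I : finType) (P : pred I) (F : I -> R[i]) :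
  (forall i, P i -> isZ (F i)) -> isZ (\sum_(i | P i) F i).
Proof.
move=> h; apply: (big_rec (fun x => isZ x)); first exact: isZ0.
by move=> i x Pi hx; apply: isZD => //; apply: h.
Qed.

Unset Implicit Arguments.
Set Strict Implicit.

Theorem theorem3p2 (R : realType) (D : diagram) (HD : is_link_diagram D)
  (a b : segment D -> R[i]) (m : component D -> R[i])
  (Hchi : is_shaping a b m)
  (f f' : flattening R D)
  (Hf : is_flattening a b m f) (Hf' : is_flattening a b m f') :
  let dmu j := ld_mu f' j - ld_mu f j in
  let dlam j := ld_lambda f' j - ld_lambda f j in
  let twopi2i := 2%:R * piC R ^+ 2 * iC R in
  (forall j, exists n : int, dmu j = n%:~R) /\
  (forall j, exists n : int, dlam j = n%:~R) /\
  congr_mod twopi2i (diagram_volume b f' - diagram_volume b f)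
    (4%:R * piC R ^+ 2 * iC R *
       \sum_(j : component D) (dlam j * ld_mu f j - dmu j * ld_lambda f j)) /\
  ((forall j, ld_mu f' j = ld_mu f j /\ ld_lambda f' j = ld_lambda f j) ->
     congr_mod twopi2i (diagram_volume b f') (diagram_volume b f)).
Proof.
move=> dmu dlam twopi2i.
have ZM : forall j, isZ (dmu j) by move=> j; exact: (dM Hf Hf' j).
have ZL : forall j, isZ (dlam j).
  move=> j; rewrite /dlam /ld_lambda.
  have -> : - (writhe j)%:~R * fmu f' j + \sum_(k | Defs.comp k == j) (Defs.eta k)%:~R * fbeta f' k
     - (- (writhe j)%:~R * fmu f j + \sum_(k | Defs.comp k == j) (Defs.eta k)%:~R * fbeta f k)
     = - (writhe j)%:~R * (fmu f' j - fmu f j)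
       + \sum_(k | Defs.comp k == j) (Defs.eta k)%:~R * (fbeta f' k - fbeta f k).
    have -> : \sum_(k | Defs.comp k == j) (Defs.eta k)%:~R * (fbeta f' k - fbeta f k) =
      \sum_(k | Defs.comp k == j) (Defs.eta k)%:~R * fbeta f' k
      - \sum_(k | Defs.comp k == j) (Defs.eta k)%:~R * fbeta f k.
      by rewrite -sumrB; apply: eq_bigr => k _; ring.
    ring.
  apply: isZD; first by apply: isZM; [apply/isZN/isZ_int | exact: (dM Hf Hf' j)].
  by apply: isZ_sum => k _; apply: isZM; [apply: isZ_int | exact: (dB Hf Hf' k)].
have C3 : congr_mod twopi2i (diagram_volume b f' - diagram_volume b f)
    (4%:R * piC R ^+ 2 * iC R *
       \sum_(j : component D) (dlam j * ld_mu f j - dmu j * ld_lambda f j)).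
  have -> : \sum_(j : component D) (dlam j * ld_mu f j - dmu j * ld_lambda f j)
      = \sum_j (ld_lambda f' j * ld_mu f j - ld_mu f' j * ld_lambda f j).
    by apply: eq_bigr => j _; rewrite /dlam /dmu; ring.
  rewrite (@sum_rhs R D f f') (_ : 4%:R * piC R ^+ 2 * iC R * _ = twopi2i * \sum_c Ec f f' c); last first.
    rewrite (@sum_Ec R D f f' HD) /twopi2i mulr_sumr [in RHS]mulr_sumr; apply: eq_bigr => k _; ring.
  rewrite /congr_mod /diagram_volume -sumrB mulr_sumr -sumrB.
  apply: (big_rec (fun x => exists n : int, x = n%:~R * twopi2i)).
    by exists 0; rewrite mul0r.
  move=> c x _ [n hn]; have [n' hn'] := cross HD Hchi Hf Hf' c.
  exists (n' + n); rewrite hn hn' /twopi2i intrD; ring.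
split; first exact: ZM.
split; first exact: ZL.
split; first exact: C3.
move=> H; have [n hn] := C3; exists n; rewrite -hn.
rewrite big1 ?mulr0 ?subr0 // => j _.
by rewrite /dlam /dmu !(H j).1 (H j).2 !subrr !mul0r subrr.
Qed.
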